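(* Let $\mathbf{L}\in\{\mathbf{K}_D,\mathbf{KD}_D,\mathbf{KT}_D\}$. The contraction rules are height-preserving admissible in $\mathsf{G}(\mathbf{L})$: for all finite multisets $\Gamma,\Delta$, every formula $\lambda$ and every $n$, if $\Gamma\Rightarrow\Delta,\lambda,\lambda$ has a derivation of height at most $n$ then so does $\Gamma\Rightarrow\Delta,\lambda$, and if $\lambda,\lambda,\Gamma\Rightarrow\Delta$ has a derivation of height at most $n$ then so does $\lambda,\Gamma\Rightarrow\Delta$.
   Context: Language: fix a finite nonempty set $\mathsf{Agt}$ of agents and a countable set $\mathsf{Prop}$ of propositional variables; $\mathsf{Grp}$ is the set of nonempty subsets of $\mathsf{Agt}$. Formulas: $\alpha::=p\mid\bot\mid\alpha\wedge\alpha\mid\alpha\vee\alpha\mid\alpha\rightarrow\alpha\mid\neg\alpha\mid D_G\alpha$ ($p\in\mathsf{Prop}$, $G\in\mathsf{Grp}$). Outmost-boxed formula: one of the form $D_G\gamma$. Sequent calculi (sequents $\Gamma\Rightarrow\Delta$ are pairs of finite multisets; a derivation is a finite tree built from initial sequents by rules; its height is the maximum length of a branch from the end sequent to an initial sequent): $\mathsf{G}(\mathbf{K}_D)$ has initial sequents $\Gamma,p\Rightarrow p,\Delta$ and $\bot,\Gamma\Rightarrow\Delta$; rules $(R\wedge)$ from $\Gamma\Rightarrow\Delta,\alpha_1$ and $\Gamma\Rightarrow\Delta,\alpha_2$ infer $\Gamma\Rightarrow\Delta,\alpha_1\wedge\alpha_2$; $(L\wedge)$ from $\alpha_1,\alpha_2,\Gamma\Rightarrow\Delta$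 infer $\alpha_1\wedge\alpha_2,\Gamma\Rightarrow\Delta$; $(R\vee)$ from $\Gamma\Rightarrow\Delta,\alpha_1,\alpha_2$ infer $\Gamma\Rightarrow\Delta,\alpha_1\vee\alpha_2$; $(L\vee)$ from $\alpha_1,\Gamma\Rightarrow\Delta$ and $\alpha_2,\Gamma\Rightarrow\Delta$ infer $\alpha_1\vee\alpha_2,\Gamma\Rightarrow\Delta$; $(R\rightarrow)$ from $\alpha_1,\Gamma\Rightarrow\Delta,\alpha_2$ infer $\Gamma\Rightarrow\Delta,\alpha_1\rightarrow\alpha_2$; $(L\rightarrow)$ from $\Gamma\Rightarrow\Delta,\alpha_1$ and $\alpha_2,\Gamma\Rightarrow\Delta$ infer $\alpha_1\rightarrow\alpha_2,\Gamma\Rightarrow\Delta$; $(R\neg)$ from $\alpha,\Gamma\Rightarrow\Delta$ infer $\Gamma\Rightarrow\Delta,\neg\alpha$; $(L\neg)$ from $\Gamma\Rightarrow\Delta,\alpha$ infer $\neg\alpha,\Gamma\Rightarrow\Delta$; $(D_K)$: from $\alpha_1,\dots,\alpha_n\Rightarrow\beta$ ($n\ge0$) infer $\Sigma,D_{G_1}\alpha_1,\dots,D_{G_n}\alpha_n\Rightarrow D_G\beta,\Omega$ where all $G_i\subseteq G$, $\Sigma$ consists only of propositional variables, $\bot$, and $D_H\gamma$ with $H\not\subseteq G$, and $\Omega$ only of propositional variables, $\bot$, outmost-boxed formulas. $\mathsf{G}(\mathbf{KD}_D)$ adds $(D_D)$: from $\Gamma\Rightarrow$ with $\Gamma\neq\emptyset$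 infer $\Sigma,D_{\{a\}}\Gamma\Rightarrow\Omega$, $\Sigma$ only propositional variables, $\bot$, $D_H\gamma$ with $H\neq\{a\}$; $\Omega$ only propositional variables, $\bot$, outmost-boxed formulas. $\mathsf{G}(\mathbf{KT}_D)$ adds to $\mathsf{G}(\mathbf{K}_D)$ $(D_T)$: from $D_G\alpha,\alpha,\Gamma\Rightarrow\Delta$ infer $D_G\alpha,\Gamma\Rightarrow\Delta$. *)

(* Defs.v *)
From Stdlib Require Import List Permutation.
From mathcomp Require Import all_boot.
Set Implicit Arguments. Unset Strict Implicit. Unset Printing Implicit Defensive.

Section Logic.
Variable Agt : finType.

Definition grp := {G : {set Agt} | G != set0}.

Inductive form : Type :=
| Var : nat -> form
| Bot : form
| And : form -> form -> form
| Or  : form -> form -> form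
| Imp : form -> form -> form
| Neg : form -> form
| Box : grp -> form -> form.

Lemma set1_nonempty (a : Agt) : [set a] != set0.
Proof. by apply/set0Pn; exists a; rewrite in_set1. Qed.

Definition sing (a : Agt) : grp := exist _ [set a] (set1_nonempty a).

Definition omega_ok (f : form) : Prop :=
  match f with Var _ | Bot | Box _ _ => True | _ => False end.

Definition sigmaK_ok (G : grp) (f : form) : Prop :=
  match f with
  | Var _ | Bot => True
  | Box H _ => ~~ (val H \subset val G)
  | _ => False end.

Definition sigmaD_ok (a : Agt) (f : form) : Prop :=
  match f with
  | Var _ | Bot => True
  | Box H _ => val H <> [set a]
  | _ => False end.

Inductive logic : Type := LK | LKD | LKT.

(* der L n Γ Δ : the sequent Γ ⇒ Δ has a derivation in G(L) of height at most n.
   Sequents are pairs of finite multisets, represented by lists modulo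
   permutation (constructor d_perm, which does not change height). *)
Inductive der (L : logic) : nat -> list form -> list form -> Prop :=
| d_perm n G D G' D' : der L n G D -> Permutation G G' -> Permutation D D' ->
    der L n G' D'
| d_ax n p G D : der L n (Var p :: G) (Var p :: D)
| d_bot n G D : der L n (Bot :: G) D
| d_Rand n G D a1 a2 : der L n G (a1 :: D) -> der L n G (a2 :: D) ->
    der L n.+1 G (And a1 a2 :: D)
| d_Land n G D a1 a2 : der L n (a1 :: a2 :: G) D ->
    der L n.+1 (And a1 a2 :: G) D
| d_Ror n G D a1 a2 : der L n G (a1 :: a2 :: D) ->
    der L n.+1 G (Or a1 a2 :: D)
| d_Lor n G D a1 a2 : der L n (a1 :: G) D -> der L n (a2 :: G) D ->
    der L n.+1 (Or a1 a2 :: G) D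
| d_Rimp n G D a1 a2 : der L n (a1 :: G) (a2 :: D) ->
    der L n.+1 G (Imp a1 a2 :: D)
| d_Limp n G D a1 a2 : der L n G (a1 :: D) -> der L n (a2 :: G) D ->
    der L n.+1 (Imp a1 a2 :: G) D
| d_Rneg n G D a : der L n (a :: G) D -> der L n.+1 G (Neg a :: D)
| d_Lneg n G D a : der L n G (a :: D) -> der L n.+1 (Neg a :: G) D
| d_DK n (Sig Om : list form) (ps : list (grp * form)) (G : grp) (b : form) :
    der L n (map snd ps) [:: b] ->
    Forall (fun p : grp * form => val (fst p) \subset val G) ps ->
    Forall (sigmaK_ok G) Sig -> Forall omega_ok Om ->
    der L n.+1 (Sig ++ map (fun p : grp * form => Box (fst p) (snd p)) ps) (Box G b :: Om)
| d_DD n (Sig Om Gm : list form) (a : Agt) :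
    L = LKD -> Gm <> nil -> der L n Gm nil ->
    Forall (sigmaD_ok a) Sig -> Forall omega_ok Om ->
    der L n.+1 (Sig ++ map (Box (sing a)) Gm) Om
| d_DT n G D (H : grp) a :
    L = LKT -> der L n (Box H a :: a :: G) D -> der L n.+1 (Box H a :: G) D.

End Logic.

(* Main.v *)
Require Import Defs.
From Stdlib Require Import List Permutation Lia.
From mathcomp Require Import all_boot.
Set Implicit Arguments. Unset Strict Implicit.

Lemma grp_dec (Agt : finType) (x y : grp Agt) : {x = y} + {x <> y}.
Proof. case: (eqVneq x y) => [->|h]; [left|right]; by [|apply/eqP]. Qed.

Lemma form_dec (Agt : finType) (x y : form Agt) : {x = y} + {x <> y}.
Proof. decide equality; first [apply: PeanoNat.Nat.eq_dec | apply: grp_dec]. Qed.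

Lemma catE (T : Type) (s t : seq T) : cat s t = app s t.
Proof. by elim: s => //= a s ->. Qed.
Lemma mapE (T U : Type) (f : T -> U) (s : seq T) : seq.map f s = List.map f s.
Proof. by elim: s => //= a s ->. Qed.

Definition bx (Agt : finType) := fun p : grp Agt * form Agt => Box (fst p) (snd p).

Ltac ps :=
  let x := fresh "x" in
  apply (proj2 (Permutation_count_occ (@form_dec _) _ _)); intro x;
  repeat match goal with H : Permutation _ _ |- _ =>
     let h := fresh in pose proof (proj1 (Permutation_count_occ (@form_dec _) _ _) H x) as h; clear H; revert h end;
  try unfold bx;
  repeat progress (rewrite ?catE ?mapE ?count_occ_app /=);
  repeat match goal with
   | |- context[form_dec ?a ?b] => destruct (form_dec a b) end;
  intros; subst; try congruence; lia.

Goal forall (Agt : finType) (a b : form Agt) (A B C : seq (form Agt)), Permutation A (a :: C) -> Permutation (b :: A ++ B)%list (B ++ [:: a; b] ++ C)%list.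
intros Agt a b A B C H. ps. Qed.


Inductive lastr (Agt : finType) (Lg : logic) : nat -> seq (form Agt) -> seq (form Agt) -> Prop :=
| l_ax n p G D G0 D0 : Permutation G (Var _ p :: G0) -> Permutation D (Var _ p :: D0) -> lastr Lg n G D
| l_bot n G D G0 : Permutation G (Bot _ :: G0) -> lastr Lg n G D
| l_Rand n G D D0 a1 a2 : Permutation D (And a1 a2 :: D0) -> der Lg n G (a1::D0) -> der Lg n G (a2::D0) -> lastr Lg n.+1 G D
| l_Land n G D G0 a1 a2 : Permutation G (And a1 a2 :: G0) -> der Lg n (a1::a2::G0) D -> lastr Lg n.+1 G D
| l_Ror n G D D0 a1 a2 : Permutation D (Or a1 a2 :: D0) -> der Lg n G (a1::a2::D0) -> lastr Lg n.+1 G D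
| l_Lor n G D G0 a1 a2 : Permutation G (Or a1 a2 :: G0) -> der Lg n (a1::G0) D -> der Lg n (a2::G0) D -> lastr Lg n.+1 G D
| l_Rimp n G D D0 a1 a2 : Permutation D (Imp a1 a2 :: D0) -> der Lg n (a1::G) (a2::D0) -> lastr Lg n.+1 G D
| l_Limp n G D G0 a1 a2 : Permutation G (Imp a1 a2 :: G0) -> der Lg n G0 (a1::D) -> der Lg n (a2::G0) D -> lastr Lg n.+1 G D
| l_Rneg n G D D0 a : Permutation D (Neg a :: D0) -> der Lg n (a::G) D0 -> lastr Lg n.+1 G D
| l_Lneg n G D G0 a : Permutation G (Neg a :: G0) -> der Lg n G0 (a::D) -> lastr Lg n.+1 G D
| l_DK n G D Sig Om ps H b : Permutation G (Sig ++ List.map (@bx Agt) ps)%list -> Permutation D (Box H b :: Om) ->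
    der Lg n (List.map snd ps) [:: b] ->
    Forall (fun p : grp Agt * form Agt => val (fst p) \subset val H) ps ->
    Forall (sigmaK_ok H) Sig -> Forall (@omega_ok Agt) Om -> lastr Lg n.+1 G D
| l_DD n G D Sig Om Gm a : Lg = LKD -> Gm <> nil -> der Lg n Gm nil ->
    Forall (sigmaD_ok a) Sig -> Forall (@omega_ok Agt) Om ->
    Permutation G (Sig ++ List.map (Box (sing a)) Gm)%list -> Permutation D Om -> lastr Lg n.+1 G D
| l_DT n G D G0 H a : Lg = LKT -> Permutation G (Box H a :: G0) -> der Lg n (Box H a :: a :: G0) D -> lastr Lg n.+1 G D.

Lemma lastr_perm (Agt : finType) Lg n (G D G' D' : seq (form Agt)) :
  lastr Lg n G D -> Permutation G G' -> Permutation D D' -> lastr Lg n G' D'.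
Proof.
move=> h pG pD; destruct h;
 [eapply l_ax|eapply l_bot|eapply l_Rand|eapply l_Land|eapply l_Ror|eapply l_Lor|eapply l_Rimp
 |eapply l_Limp|eapply l_Rneg|eapply l_Lneg|eapply l_DK|eapply l_DD|eapply l_DT].
all: try eassumption.
all: try (apply: Permutation_trans (Permutation_sym pG) _; eassumption).
all: try (apply: Permutation_trans (Permutation_sym pD) _; eassumption).
all: match goal with H : der _ _ _ _ |- _ => apply: (d_perm H); solve [repeat (first [assumption | apply Permutation_refl | apply perm_skip])] end.
Qed.


Lemma der_last (Agt : finType) Lg n (G D : seq (form Agt)) : der Lg n G D -> lastr Lg n G D.
Proof.
elim=> {n G D}.
- move=> n G D G' D' _ IH pG pD; exact: lastr_perm IH pG pD.
- move=> n p G D; apply: l_ax; apply Permutation_refl.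
- move=> n G D; apply: l_bot; apply Permutation_refl.
- move=> n G D a1 a2 h1 _ h2 _; apply: l_Rand h1 h2; apply Permutation_refl.
- move=> n G D a1 a2 h1 _; apply: l_Land h1; apply Permutation_refl.
- move=> n G D a1 a2 h1 _; apply: l_Ror h1; apply Permutation_refl.
- move=> n G D a1 a2 h1 _ h2 _; apply: l_Lor h1 h2; apply Permutation_refl.
- move=> n G D a1 a2 h1 _; apply: l_Rimp h1; apply Permutation_refl.
- move=> n G D a1 a2 h1 _ h2 _; apply: l_Limp h1 h2; apply Permutation_refl.
- move=> n G D a h1 _; apply: l_Rneg h1; apply Permutation_refl.
- move=> n G D a h1 _; apply: l_Lneg h1; apply Permutation_refl.
- move=> n Sig Om ps H b h _ f1 f2 f3; rewrite mapE in h.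
  apply: (l_DK (Sig:=Sig) (Om:=Om) (ps:=ps) _ _ h f1 f2 f3); last by apply Permutation_refl.
  rewrite catE mapE; apply Permutation_refl.
- move=> n Sig Om Gm a e ne h _ f1 f2.
  apply: (l_DD (Sig:=Sig) (Om:=Om) (Gm:=Gm) e ne h f1 f2); last by apply Permutation_refl.
  rewrite catE mapE; apply Permutation_refl.
- move=> n G D H a e h _; apply: l_DT e _ h; apply Permutation_refl.
Qed.

Lemma der_w (Agt : finType) Lg n (G D : seq (form Agt)) : der Lg n G D -> der Lg n.+1 G D.
Proof.
elim=> {n G D}; try by econstructor; eauto.
Qed.

Ltac ins :=
  match goal with |- In ?a ?L =>
  apply (proj2 (count_occ_In (@form_dec _) L a));
  repeat match goal with
  | H : Permutation _ _ |- _ =>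
     let h := fresh in pose proof (proj1 (Permutation_count_occ (@form_dec _) _ _) H a) as h; clear H; revert h
  | H : In a _ |- _ =>
     let h := fresh in pose proof (proj1 (count_occ_In (@form_dec _) _ a) H) as h; clear H; revert h end end;
  try unfold bx;
  repeat progress (rewrite ?catE ?mapE ?count_occ_app /=);
  repeat match goal with
   | |- context[form_dec ?a ?b] => destruct (form_dec a b) end;
  intros; subst; try congruence; lia.

Definition compound (Agt : finType) (f : form Agt) : Prop :=
  match f with And _ _ | Or _ _ | Imp _ _ | Neg _ => True | _ => False end.

Lemma comp_omega (Agt : finType) (f : form Agt) : compound f -> omega_ok f -> False.
Proof. by case: f. Qed.
Lemma comp_sigK (Agt : finType) H (f : form Agt) : compound f -> sigmaK_ok H f -> False.
Proof. by case: f. Qed.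
Lemma comp_sigD (Agt : finType) a (f : form Agt) : compound f -> sigmaD_ok a f -> False.
Proof. by case: f. Qed.

Lemma ax_in (Agt : finType) Lg n p (G D : seq (form Agt)) :
  In (Var _ p) G -> In (Var _ p) D -> der Lg n G D.
Proof.
move=> h1 h2; case: (in_split _ _ h1) => G1 [G2 ->]; case: (in_split _ _ h2) => D1 [D2 ->].
apply: (d_perm (d_ax Lg n p (G1 ++ G2)%list (D1 ++ D2)%list)); ps.
Qed.

Lemma bot_in (Agt : finType) Lg n (G D : seq (form Agt)) :
  In (Bot _) G -> der Lg n G D.
Proof.
move=> h1; case: (in_split _ _ h1) => G1 [G2 ->].
apply: (d_perm (d_bot Lg n (G1 ++ G2)%list D)); [ps|apply Permutation_refl].
Qed.

Lemma split2 (Agt : finType) (x y : form Agt) A B : Permutation (x :: A) (y :: B) ->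
  (x = y /\ Permutation A B) \/ (x <> y /\ exists C, Permutation A (y :: C) /\ Permutation B (x :: C)).
Proof.
move=> p; case: (form_dec x y) => [e|ne].
- subst; left; split => //; exact: Permutation_cons_inv p.
- right; split => //.
  have : In y A.
    have := Permutation_in _ (Permutation_sym p) (in_eq y B); case => // e; congruence.
  move=> h1; case: (in_split _ _ h1) => A1 [A2 e]; subst.
  exists (A1 ++ A2)%list; split; first ps.
  apply: (Permutation_cons_inv (a:=y)); apply: Permutation_trans (Permutation_sym p) _; ps.
Qed.

Lemma split3 (Agt : finType) (x y : form Agt) A B : Permutation (x :: A) (y :: y :: B) ->
  (x = y /\ Permutation A (y :: B)) \/ (x <> y /\ exists C, Permutation A (y :: y :: C) /\ Permutation B (x :: C)).
Proof.
move=> /split2 [[-> p]|[ne [C [p1 p2]]]]; first by left.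
right; split => //.
case: (split2 p2) => [[e _]|[_ [C2 [q1 q2]]]]; first congruence.
exists C2; split; ps.
Qed.

Lemma in_perm (T : Type) (x : T) A : In x A -> exists C, Permutation A (x :: C).
Proof.
move=> h1; case: (in_split _ _ h1) => A1 [A2 ->]; exists (A1 ++ A2)%list; apply Permutation_sym, Permutation_middle.
Qed.

Definition rprem (Agt : finType) (f : form Agt) : seq (seq (form Agt) * seq (form Agt)) :=
  match f with
  | And a1 a2 => [:: ([::], [:: a1]); ([::], [:: a2])]
  | Or a1 a2 => [:: ([::], [:: a1; a2])]
  | Imp a1 a2 => [:: ([:: a1], [:: a2])]
  | Neg a => [:: ([:: a], [::])]
  | _ => [::] end.

Definition lprem (Agt : finType) (f : form Agt) : seq (seq (form Agt) * seq (form Agt)) :=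
  match f with
  | And a1 a2 => [:: ([:: a1; a2], [::])]
  | Or a1 a2 => [:: ([:: a1], [::]); ([:: a2], [::])]
  | Imp a1 a2 => [:: ([::], [:: a1]); ([:: a2], [::])]
  | Neg a => [:: ([::], [:: a])]
  | _ => [::] end.

Lemma rprem_comp (Agt : finType) (f : form Agt) X Y : In (X, Y) (rprem f) -> compound f.
Proof. by case: f. Qed.
Lemma lprem_comp (Agt : finType) (f : form Agt) X Y : In (X, Y) (lprem f) -> compound f.
Proof. by case: f. Qed.

Ltac dp H := apply: (d_perm H); ps.

Lemma inv_R (Agt : finType) Lg n : forall (G D D0 X Y : seq (form Agt)) f,
  der Lg n G D -> Permutation D (f :: D0) -> In (X, Y) (rprem f) -> der Lg n (X ++ G)%list (Y ++ D0)%list.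
Proof.
elim/ltn_ind: n => n IH G D D0 X Y f h pD0 hin.
have hc := rprem_comp hin.
have hl := der_last h; clear h.
destruct hl as [ k p G1 D1 G0 D0' pG pD
| k G1 D1 G0 pG
| k G1 D1 D0' a1 a2 pD h1 h2
| k G1 D1 G0 a1 a2 pG h1
| k G1 D1 D0' a1 a2 pD h1
| k G1 D1 G0 a1 a2 pG h1 h2
| k G1 D1 D0' a1 a2 pD h1
| k G1 D1 G0 a1 a2 pG h1 h2
| k G1 D1 D0' a pD h1
| k G1 D1 G0 a pG h1
| k G1 D1 Sig Om ps H b pG pD h1 f1 f2 f3
| k G1 D1 Sig Om Gm a e ne h1 f1 f2 pG pD
| k G1 D1 G0 H a e pG h1 ].
- have ne : f <> Var _ p by move=> e; subst.
  apply: (@ax_in _ _ _ p); ins.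
- apply: bot_in; ins.
- have IHk := IH k (ltnSn k).
  have := split2 (Permutation_trans (Permutation_sym pD0) pD).
  case=> [[e q]|[ne [C [q1 q2]]]].
  + subst; case: hin => [[<- <-]|[[<- <-]|[]]] /=; apply: der_w; dp h1 || dp h2.
  + have r1 := IHk _ _ (a1 :: C) X Y f h1 ltac:(ps) hin.
    have r2 := IHk _ _ (a2 :: C) X Y f h2 ltac:(ps) hin.
    have s1 : der Lg k (X ++ G1)%list (a1 :: Y ++ C)%list by dp r1.
    have s2 : der Lg k (X ++ G1)%list (a2 :: Y ++ C)%list by dp r2.
    dp (d_Rand s1 s2).
- have IHk := IH k (ltnSn k).
  have r1 := IHk _ _ D0 X Y f h1 pD0 hin.
  have s1 : der Lg k (a1 :: a2 :: X ++ G0)%list (Y ++ D0)%list by dp r1.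
  dp (d_Land s1).
- have IHk := IH k (ltnSn k).
  have := split2 (Permutation_trans (Permutation_sym pD0) pD).
  case=> [[e q]|[ne [C [q1 q2]]]].
  + subst; case: hin => [[<- <-]|[]] /=; apply: der_w; dp h1.
  + have r1 := IHk _ _ (a1 :: a2 :: C) X Y f h1 ltac:(ps) hin.
    have s1 : der Lg k (X ++ G1)%list (a1 :: a2 :: Y ++ C)%list by dp r1.
    dp (d_Ror s1).
- have IHk := IH k (ltnSn k).
  have r1 := IHk _ _ D0 X Y f h1 pD0 hin.
  have r2 := IHk _ _ D0 X Y f h2 pD0 hin.
  have s1 : der Lg k (a1 :: X ++ G0)%list (Y ++ D0)%list by dp r1.
  have s2 : der Lg k (a2 :: X ++ G0)%list (Y ++ D0)%list by dp r2.
  dp (d_Lor s1 s2).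
- have IHk := IH k (ltnSn k).
  have := split2 (Permutation_trans (Permutation_sym pD0) pD).
  case=> [[e q]|[ne [C [q1 q2]]]].
  + subst; case: hin => [[<- <-]|[]] /=; apply: der_w; dp h1.
  + have r1 := IHk _ _ (a2 :: C) X Y f h1 ltac:(ps) hin.
    have s1 : der Lg k (a1 :: X ++ G1)%list (a2 :: Y ++ C)%list by dp r1.
    dp (d_Rimp s1).
- have IHk := IH k (ltnSn k).
  have r1 := IHk _ _ (a1 :: D0) X Y f h1 ltac:(ps) hin.
  have r2 := IHk _ _ D0 X Y f h2 pD0 hin.
  have s1 : der Lg k (X ++ G0)%list (a1 :: Y ++ D0)%list by dp r1.
  have s2 : der Lg k (a2 :: X ++ G0)%list (Y ++ D0)%list by dp r2.
  dp (d_Limp s1 s2).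
- have IHk := IH k (ltnSn k).
  have := split2 (Permutation_trans (Permutation_sym pD0) pD).
  case=> [[e q]|[ne [C [q1 q2]]]].
  + subst; case: hin => [[<- <-]|[]] /=; apply: der_w; dp h1.
  + have r1 := IHk _ _ C X Y f h1 q2 hin.
    have s1 : der Lg k (a :: X ++ G1)%list (Y ++ C)%list by dp r1.
    dp (d_Rneg s1).
- have IHk := IH k (ltnSn k).
  have r1 := IHk _ _ (a :: D0) X Y f h1 ltac:(ps) hin.
  have s1 : der Lg k (X ++ G0)%list (a :: Y ++ D0)%list by dp r1.
  dp (d_Lneg s1).
- exfalso; have : In f (Box H b :: Om) by ins.
  case=> [e|i]; first by subst.
  exact: comp_omega hc (proj1 (Forall_forall _ _) f3 _ i).
- exfalso; have : In f Om by ins.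
  move=> i; exact: comp_omega hc (proj1 (Forall_forall _ _) f2 _ i).
- have IHk := IH k (ltnSn k).
  have r1 := IHk _ _ D0 X Y f h1 pD0 hin.
  have s1 : der Lg k (Box H a :: a :: X ++ G0)%list (Y ++ D0)%list by dp r1.
  dp (d_DT e s1).
Qed.

Lemma inv_L (Agt : finType) Lg n : forall (G D G0 X Y : seq (form Agt)) f,
  der Lg n G D -> Permutation G (f :: G0) -> In (X, Y) (lprem f) -> der Lg n (X ++ G0)%list (Y ++ D)%list.
Proof.
elim/ltn_ind: n => n IH G D G0 X Y f h pG0 hin.
have hc := lprem_comp hin.
have hl := der_last h; clear h.
destruct hl as [ k p G1 D1 G0' D0 pG pD
| k G1 D1 G0' pG
| k G1 D1 D0 a1 a2 pD h1 h2
| k G1 D1 G0' a1 a2 pG h1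
| k G1 D1 D0 a1 a2 pD h1
| k G1 D1 G0' a1 a2 pG h1 h2
| k G1 D1 D0 a1 a2 pD h1
| k G1 D1 G0' a1 a2 pG h1 h2
| k G1 D1 D0 a pD h1
| k G1 D1 G0' a pG h1
| k G1 D1 Sig Om ps H b pG pD h1 f1 f2 f3
| k G1 D1 Sig Om Gm a e ne h1 f1 f2 pG pD
| k G1 D1 G0' H a e pG h1 ].
- have ne : f <> Var _ p by move=> e; subst.
  apply: (@ax_in _ _ _ p); ins.
- have ne : f <> Bot _ by move=> e; subst.
  apply: bot_in; ins.
- have IHk := IH k (ltnSn k).
  have r1 := IHk _ _ G0 X Y f h1 pG0 hin.
  have r2 := IHk _ _ G0 X Y f h2 pG0 hin.
  have s1 : der Lg k (X ++ G0)%list (a1 :: Y ++ D0)%list by dp r1.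
  have s2 : der Lg k (X ++ G0)%list (a2 :: Y ++ D0)%list by dp r2.
  dp (d_Rand s1 s2).
- have IHk := IH k (ltnSn k).
  have := split2 (Permutation_trans (Permutation_sym pG0) pG).
  case=> [[e q]|[ne [C [q1 q2]]]].
  + subst; case: hin => [[<- <-]|[]] /=; apply: der_w; dp h1.
  + have r1 := IHk _ _ (a1 :: a2 :: C) X Y f h1 ltac:(ps) hin.
    have s1 : der Lg k (a1 :: a2 :: X ++ C)%list (Y ++ D1)%list by dp r1.
    dp (d_Land s1).
- have IHk := IH k (ltnSn k).
  have r1 := IHk _ _ G0 X Y f h1 pG0 hin.
  have s1 : der Lg k (X ++ G0)%list (a1 :: a2 :: Y ++ D0)%list by dp r1.
  dp (d_Ror s1).
- have IHk := IH k (ltnSn k).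
  have := split2 (Permutation_trans (Permutation_sym pG0) pG).
  case=> [[e q]|[ne [C [q1 q2]]]].
  + subst; case: hin => [[<- <-]|[[<- <-]|[]]] /=; apply: der_w; dp h1 || dp h2.
  + have r1 := IHk _ _ (a1 :: C) X Y f h1 ltac:(ps) hin.
    have r2 := IHk _ _ (a2 :: C) X Y f h2 ltac:(ps) hin.
    have s1 : der Lg k (a1 :: X ++ C)%list (Y ++ D1)%list by dp r1.
    have s2 : der Lg k (a2 :: X ++ C)%list (Y ++ D1)%list by dp r2.
    dp (d_Lor s1 s2).
- have IHk := IH k (ltnSn k).
  have r1 := IHk _ _ (a1 :: G0) X Y f h1 ltac:(ps) hin.
  have s1 : der Lg k (a1 :: X ++ G0)%list (a2 :: Y ++ D0)%list by dp r1.
  dp (d_Rimp s1).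
- have IHk := IH k (ltnSn k).
  have := split2 (Permutation_trans (Permutation_sym pG0) pG).
  case=> [[e q]|[ne [C [q1 q2]]]].
  + subst; case: hin => [[<- <-]|[[<- <-]|[]]] /=; apply: der_w; dp h1 || dp h2.
  + have r1 := IHk _ _ C X Y f h1 q2 hin.
    have r2 := IHk _ _ (a2 :: C) X Y f h2 ltac:(ps) hin.
    have s1 : der Lg k (X ++ C)%list (a1 :: Y ++ D1)%list by dp r1.
    have s2 : der Lg k (a2 :: X ++ C)%list (Y ++ D1)%list by dp r2.
    dp (d_Limp s1 s2).
- have IHk := IH k (ltnSn k).
  have r1 := IHk _ _ (a :: G0) X Y f h1 ltac:(ps) hin.
  have s1 : der Lg k (a :: X ++ G0)%list (Y ++ D0)%list by dp r1.
  dp (d_Rneg s1).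
- have IHk := IH k (ltnSn k).
  have := split2 (Permutation_trans (Permutation_sym pG0) pG).
  case=> [[e q]|[ne [C [q1 q2]]]].
  + subst; case: hin => [[<- <-]|[]] /=; apply: der_w; dp h1.
  + have r1 := IHk _ _ C X Y f h1 q2 hin.
    have s1 : der Lg k (X ++ C)%list (a :: Y ++ D1)%list by dp r1.
    dp (d_Lneg s1).
- exfalso; have : In f (Sig ++ List.map (@bx Agt) ps)%list by ins.
  move=> i0; case: (in_app_or _ _ _ i0) => [i|i]; last by case: (proj1 (in_map_iff _ _ _) i) => q [e0 _]; subst.
  exact: comp_sigK hc (proj1 (Forall_forall _ _) f2 _ i).
- exfalso; have : In f (Sig ++ List.map (Box (sing a)) Gm)%list by ins.
  move=> i0; case: (in_app_or _ _ _ i0) => [i|i]; last by case: (proj1 (in_map_iff _ _ _) i) => q [e0 _]; subst.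
  exact: comp_sigD hc (proj1 (Forall_forall _ _) f1 _ i).
- have IHk := IH k (ltnSn k).
  have := split2 (Permutation_trans (Permutation_sym pG0) pG).
  case=> [[e' q]|[ne [C [q1 q2]]]]; first by subst.
  have r1 := IHk _ _ (Box H a :: a :: C) X Y f h1 ltac:(ps) hin.
  have s1 : der Lg k (Box H a :: a :: X ++ C)%list (Y ++ D1)%list by dp r1.
  dp (d_DT e s1).
Qed.

Lemma Forall_incl' (T : Type) (P : T -> Prop) A B : Forall P A -> (forall x, In x B -> In x A) -> Forall P B.
Proof. move=> /Forall_forall h i; apply/Forall_forall => x /i; exact: h. Qed.

Lemma map_two (Agt : finType) (T : Type) (f : T -> form Agt) (finj : forall a b, f a = f b -> a = b)
  (ps : seq T) (Sig G0 : seq (form Agt)) l :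
  Permutation (l :: l :: G0) (Sig ++ List.map f ps)%list -> ~ In l Sig ->
  exists q ps', f q = l /\ Permutation ps (q :: q :: ps').
Proof.
move=> p ni.
have c : 2 <= count_occ (@form_dec _) (List.map f ps) l.
  have := proj1 (Permutation_count_occ (@form_dec _) _ _) p l.
  rewrite count_occ_app (proj1 (count_occ_not_In (@form_dec _) _ _) ni) /=.
  case: (form_dec l l) => // _ h; apply/leP; lia.
have i1 : In l (List.map f ps) by apply (proj2 (count_occ_In (@form_dec _) _ _)); apply/leP; apply: leq_trans c.
case: (proj1 (in_map_iff _ _ _) i1) => q [e iq]; subst l.
case: (in_split _ _ iq) => ps1 [ps2 E]; subst ps.
move: c; rewrite map_app count_occ_app /=; case: (form_dec (f q) (f q)) => // _ c.
have i2 : In (f q) (List.map f (ps1 ++ ps2)%list).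
  apply (proj2 (count_occ_In (@form_dec _) _ _)); rewrite map_app count_occ_app.
  move/leP: c; lia.
case: (proj1 (in_map_iff _ _ _) i2) => q' [e iq']; have eq := finj _ _ e; subst q'.
case: (in_split _ _ iq') => ps3 [ps4 E]; exists q, (ps3 ++ ps4)%list; split => //.
apply: Permutation_trans (Permutation_sym (Permutation_middle _ _ _)) _.
apply perm_skip; rewrite E; apply Permutation_sym, Permutation_middle.
Qed.

Lemma bx_inj (Agt : finType) (a b : grp Agt * form Agt) : bx a = bx b -> a = b.
Proof. by case: a => ? ?; case: b => ? ? /= [-> ->]. Qed.
Lemma boxs_inj (Agt : finType) (a : Agt) (x y : form Agt) : Box (sing a) x = Box (sing a) y -> x = y.
Proof. by case. Qed.

Lemma ctr (Agt : finType) Lg n :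
  (forall (G D D0 : seq (form Agt)) l, der Lg n G D -> Permutation D (l :: l :: D0) -> der Lg n G (l :: D0)) /\
  (forall (G D G0 : seq (form Agt)) l, der Lg n G D -> Permutation G (l :: l :: G0) -> der Lg n (l :: G0) D).
Proof.
elim/ltn_ind: n => n IH; split.
{ move=> G D D0 l h pD0.
have hl := der_last h; clear h.
destruct hl as [ k p G1 D1 G0 D0' pG pD
| k G1 D1 G0 pG
| k G1 D1 D0' a1 a2 pD h1 h2
| k G1 D1 G0 a1 a2 pG h1
| k G1 D1 D0' a1 a2 pD h1
| k G1 D1 G0 a1 a2 pG h1 h2
| k G1 D1 D0' a1 a2 pD h1
| k G1 D1 G0 a1 a2 pG h1 h2
| k G1 D1 D0' a pD h1
| k G1 D1 G0 a pG h1
| k G1 D1 Sig Om ps H b pG pD h1 f1 f2 f3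
| k G1 D1 Sig Om Gm a e ne h1 f1 f2 pG pD
| k G1 D1 G0 H a e pG h1 ].
- apply: (@ax_in _ _ _ p); ins.
- apply: bot_in; ins.
- have [IHR IHL] := IH k (ltnSn k).
  case: (split3 (Permutation_trans (Permutation_sym pD) pD0)) => [[e q]|[ne [C [q1 q2]]]].
  + subst l.
    have r1 := inv_R (f:=And a1 a2) (X:=[::]) (Y:=[:: a1]) h1 (D0:=a1 :: D0) ltac:(ps) ltac:(simpl; tauto).
    have r2 := inv_R (f:=And a1 a2) (X:=[::]) (Y:=[:: a2]) h2 (D0:=a2 :: D0) ltac:(ps) ltac:(simpl; tauto).
    simpl in r1, r2.
    exact: d_Rand (IHR _ _ _ _ r1 (Permutation_refl _)) (IHR _ _ _ _ r2 (Permutation_refl _)).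
  + have r1 := IHR _ _ (a1 :: C) l h1 ltac:(ps).
    have r2 := IHR _ _ (a2 :: C) l h2 ltac:(ps).
    have s1 : der Lg k G1 (a1 :: l :: C) by dp r1.
    have s2 : der Lg k G1 (a2 :: l :: C) by dp r2.
    dp (d_Rand s1 s2).
- have [IHR IHL] := IH k (ltnSn k).
  have r1 := IHR _ _ D0 l h1 pD0.
  dp (d_Land r1).
- have [IHR IHL] := IH k (ltnSn k).
  case: (split3 (Permutation_trans (Permutation_sym pD) pD0)) => [[e q]|[ne [C [q1 q2]]]].
  + subst l.
    have r1 := inv_R (f:=Or a1 a2) (X:=[::]) (Y:=[:: a1; a2]) h1 (D0:=a1 :: a2 :: D0) ltac:(ps) ltac:(simpl; tauto).
    simpl in r1.
    have r2 := IHR _ _ (a2 :: a2 :: D0) a1 r1 ltac:(ps).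
    have r3 := IHR _ _ (a1 :: D0) a2 r2 ltac:(ps).
    have s : der Lg k G1 (a1 :: a2 :: D0) by dp r3.
    exact: d_Ror s.
  + have r1 := IHR _ _ (a1 :: a2 :: C) l h1 ltac:(ps).
    have s1 : der Lg k G1 (a1 :: a2 :: l :: C) by dp r1.
    dp (d_Ror s1).
- have [IHR IHL] := IH k (ltnSn k).
  have r1 := IHR _ _ D0 l h1 pD0.
  have r2 := IHR _ _ D0 l h2 pD0.
  dp (d_Lor r1 r2).
- have [IHR IHL] := IH k (ltnSn k).
  case: (split3 (Permutation_trans (Permutation_sym pD) pD0)) => [[e q]|[ne [C [q1 q2]]]].
  + subst l.
    have r1 := inv_R (f:=Imp a1 a2) (X:=[:: a1]) (Y:=[:: a2]) h1 (D0:=a2 :: D0) ltac:(ps) ltac:(simpl; tauto).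
    simpl in r1.
    have r2 := IHL _ _ G1 a1 r1 (Permutation_refl _).
    have r3 := IHR _ _ D0 a2 r2 (Permutation_refl _).
    exact: d_Rimp r3.
  + have r1 := IHR _ _ (a2 :: C) l h1 ltac:(ps).
    have s1 : der Lg k (a1 :: G1) (a2 :: l :: C) by dp r1.
    dp (d_Rimp s1).
- have [IHR IHL] := IH k (ltnSn k).
  have r1 := IHR _ _ (a1 :: D0) l h1 ltac:(ps).
  have r2 := IHR _ _ D0 l h2 pD0.
  have s1 : der Lg k G0 (a1 :: l :: D0) by dp r1.
  dp (d_Limp s1 r2).
- have [IHR IHL] := IH k (ltnSn k).
  case: (split3 (Permutation_trans (Permutation_sym pD) pD0)) => [[e q]|[ne [C [q1 q2]]]].
  + subst l.
    have r1 := inv_R (f:=Neg a) (X:=[:: a]) (Y:=[::]) h1 (D0:=D0) q ltac:(simpl; tauto).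
    simpl in r1.
    have r2 := IHL _ _ G1 a r1 (Permutation_refl _).
    exact: d_Rneg r2.
  + have r1 := IHR _ _ C l h1 q1.
    dp (d_Rneg r1).
- have [IHR IHL] := IH k (ltnSn k).
  have r1 := IHR _ _ (a :: D0) l h1 ltac:(ps).
  have s1 : der Lg k G0 (a :: l :: D0) by dp r1.
  dp (d_Lneg s1).
- rewrite -mapE in h1.
  case: (split3 (Permutation_trans (Permutation_sym pD) pD0)) => [[e q]|[ne [C [q1 q2]]]].
  + subst l.
    have fo : Forall (@omega_ok Agt) D0 by apply: (Forall_incl' f3) => x i; ins.
    dp (d_DK (Sig:=Sig) (Om:=D0) h1 f1 f2 fo).
  + have fo : Forall (@omega_ok Agt) (l :: C) by apply: (Forall_incl' f3) => x i; ins.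
    dp (d_DK (Sig:=Sig) (Om:=l :: C) h1 f1 f2 fo).
- have fo : Forall (@omega_ok Agt) (l :: D0) by apply: (Forall_incl' f2) => x i; ins.
  dp (d_DD (Sig:=Sig) (Om:=l :: D0) e ne h1 f1 fo).
- have [IHR IHL] := IH k (ltnSn k).
  have r1 := IHR _ _ D0 l h1 pD0.
  dp (d_DT e r1).
}
move=> G D G0 l h pG0.
have hl := der_last h; clear h.
destruct hl as [ k p G1 D1 G0' D0 pG pD
| k G1 D1 G0' pG
| k G1 D1 D0 a1 a2 pD h1 h2
| k G1 D1 G0' a1 a2 pG h1
| k G1 D1 D0 a1 a2 pD h1
| k G1 D1 G0' a1 a2 pG h1 h2
| k G1 D1 D0 a1 a2 pD h1
| k G1 D1 G0' a1 a2 pG h1 h2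
| k G1 D1 D0 a pD h1
| k G1 D1 G0' a pG h1
| k G1 D1 Sig Om ps H b pG pD h1 f1 f2 f3
| k G1 D1 Sig Om Gm a e ne h1 f1 f2 pG pD
| k G1 D1 G0' H a e pG h1 ].
- apply: (@ax_in _ _ _ p); ins.
- apply: bot_in; ins.
- have [IHR IHL] := IH k (ltnSn k).
  have r1 := IHL _ _ G0 l h1 pG0.
  have r2 := IHL _ _ G0 l h2 pG0.
  dp (d_Rand r1 r2).
- have [IHR IHL] := IH k (ltnSn k).
  case: (split3 (Permutation_trans (Permutation_sym pG) pG0)) => [[e q]|[ne [C [q1 q2]]]].
  + subst l.
    have r1 := inv_L (f:=And a1 a2) (X:=[:: a1; a2]) (Y:=[::]) h1 (G0:=a1 :: a2 :: G0) ltac:(ps) ltac:(simpl; tauto).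
    simpl in r1.
    have r2 := IHL _ _ (a2 :: a2 :: G0) a1 r1 ltac:(ps).
    have r3 := IHL _ _ (a1 :: G0) a2 r2 ltac:(ps).
    have s : der Lg k (a1 :: a2 :: G0) D1 by dp r3.
    exact: d_Land s.
  + have r1 := IHL _ _ (a1 :: a2 :: C) l h1 ltac:(ps).
    have s1 : der Lg k (a1 :: a2 :: l :: C) D1 by dp r1.
    dp (d_Land s1).
- have [IHR IHL] := IH k (ltnSn k).
  have r1 := IHL _ _ G0 l h1 pG0.
  dp (d_Ror r1).
- have [IHR IHL] := IH k (ltnSn k).
  case: (split3 (Permutation_trans (Permutation_sym pG) pG0)) => [[e q]|[ne [C [q1 q2]]]].
  + subst l.
    have r1 := inv_L (f:=Or a1 a2) (X:=[:: a1]) (Y:=[::]) h1 (G0:=a1 :: G0) ltac:(ps) ltac:(simpl; tauto).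
    have r2 := inv_L (f:=Or a1 a2) (X:=[:: a2]) (Y:=[::]) h2 (G0:=a2 :: G0) ltac:(ps) ltac:(simpl; tauto).
    simpl in r1, r2.
    exact: d_Lor (IHL _ _ _ _ r1 (Permutation_refl _)) (IHL _ _ _ _ r2 (Permutation_refl _)).
  + have r1 := IHL _ _ (a1 :: C) l h1 ltac:(ps).
    have r2 := IHL _ _ (a2 :: C) l h2 ltac:(ps).
    have s1 : der Lg k (a1 :: l :: C) D1 by dp r1.
    have s2 : der Lg k (a2 :: l :: C) D1 by dp r2.
    dp (d_Lor s1 s2).
- have [IHR IHL] := IH k (ltnSn k).
  have r1 := IHL _ _ (a1 :: G0) l h1 ltac:(ps).
  have s1 : der Lg k (a1 :: l :: G0) (a2 :: D0) by dp r1.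
  dp (d_Rimp s1).
- have [IHR IHL] := IH k (ltnSn k).
  case: (split3 (Permutation_trans (Permutation_sym pG) pG0)) => [[e q]|[ne [C [q1 q2]]]].
  + subst l.
    have r1 := inv_L (f:=Imp a1 a2) (X:=[::]) (Y:=[:: a1]) h1 (G0:=G0) q ltac:(simpl; tauto).
    have r2 := inv_L (f:=Imp a1 a2) (X:=[:: a2]) (Y:=[::]) h2 (G0:=a2 :: G0) ltac:(ps) ltac:(simpl; tauto).
    simpl in r1, r2.
    exact: d_Limp (IHR _ _ _ _ r1 (Permutation_refl _)) (IHL _ _ _ _ r2 (Permutation_refl _)).
  + have r1 := IHL _ _ C l h1 q1.
    have r2 := IHL _ _ (a2 :: C) l h2 ltac:(ps).
    have s2 : der Lg k (a2 :: l :: C) D1 by dp r2.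
    dp (d_Limp r1 s2).
- have [IHR IHL] := IH k (ltnSn k).
  have r1 := IHL _ _ (a :: G0) l h1 ltac:(ps).
  have s1 : der Lg k (a :: l :: G0) D0 by dp r1.
  dp (d_Rneg s1).
- have [IHR IHL] := IH k (ltnSn k).
  case: (split3 (Permutation_trans (Permutation_sym pG) pG0)) => [[e q]|[ne [C [q1 q2]]]].
  + subst l.
    have r1 := inv_L (f:=Neg a) (X:=[::]) (Y:=[:: a]) h1 (G0:=G0) q ltac:(simpl; tauto).
    simpl in r1.
    exact: d_Lneg (IHR _ _ _ _ r1 (Permutation_refl _)).
  + have r1 := IHL _ _ C l h1 q1.
    dp (d_Lneg r1).
- have pp := Permutation_trans (Permutation_sym pG0) pG.
  case: (in_dec (@form_dec _) l Sig) => [iS|niS].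
  + case: (in_perm iS) => Sig' pS.
    have fs : Forall (sigmaK_ok H) Sig' by apply: (Forall_incl' f2) => x i; ins.
    rewrite -mapE in h1.
    dp (d_DK (Sig:=Sig') (Om:=Om) h1 f1 fs f3).
  + have [IHR IHL] := IH k (ltnSn k).
    case: (map_two (@bx_inj Agt) pp niS) => q [ps' [e pq]].
    have pm := Permutation_map (@bx Agt) pq.
    have pn := Permutation_map snd pq.
    have r1 := IHL _ _ (List.map snd ps') (snd q) h1 pn.
    have r2 : der Lg k (seq.map snd (q :: ps')) [:: b] by rewrite mapE.
    have fq : Forall (fun p : grp Agt * form Agt => val (fst p) \subset val H) (q :: ps').
      apply: (Forall_incl' f1) => x i; apply: (Permutation_in _ (Permutation_sym pq)).
      by case: i => [->|i]; [left|right; right].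
    subst l; dp (d_DK (Sig:=Sig) (Om:=Om) r2 fq f2 f3).
- have pp := Permutation_trans (Permutation_sym pG0) pG.
  case: (in_dec (@form_dec _) l Sig) => [iS|niS].
  + case: (in_perm iS) => Sig' pS.
    have fs : Forall (sigmaD_ok a) Sig' by apply: (Forall_incl' f1) => x i; ins.
    dp (d_DD (Sig:=Sig') (Om:=Om) e ne h1 fs f2).
  + have [IHR IHL] := IH k (ltnSn k).
    case: (map_two (@boxs_inj Agt a) pp niS) => q [Gm' [el pq]].
    have pm := Permutation_map (Box (sing a)) pq.
    have r1 := IHL _ _ Gm' q h1 pq.
    have ne' : q :: Gm' <> [::] by [].
    subst l; dp (d_DD (Sig:=Sig) (Om:=Om) e ne' r1 f1 f2).
- have [IHR IHL] := IH k (ltnSn k).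
  case: (split3 (Permutation_trans (Permutation_sym pG) pG0)) => [[e' q]|[ne [C [q1 q2]]]].
  + subst l.
    have r1 := IHL _ _ (a :: G0) (Box H a) h1 ltac:(ps).
    exact: d_DT e r1.
  + have r1 := IHL _ _ (Box H a :: a :: C) l h1 ltac:(ps).
    have s1 : der Lg k (Box H a :: a :: l :: C) D1 by dp r1.
    dp (d_DT e s1).
Qed.

Theorem proposition3p10 (Agt : finType) (hAgt : 0 < #|Agt|) (L : logic)
  (Gm Dl : list (form Agt)) (lam : form Agt) (n : nat) :
  (der L n Gm (Dl ++ [:: lam; lam]) -> der L n Gm (Dl ++ [:: lam])) /\
  (der L n (lam :: lam :: Gm) Dl -> der L n (lam :: Gm) Dl).
Proof.
have [CR CL] := @ctr Agt L n; split => h.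
- have r := CR _ _ Dl lam h ltac:(ps).
  apply: (d_perm r); [apply Permutation_refl | ps].
- exact: CL _ _ Gm lam h (Permutation_refl _).
Qed.
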